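(* Let $X$ be a real or complex Banach space, $(A(n))_{n\in\mathbb{N}}$ a sequence in $\mathcal{B}(X)$, and $P:\mathbb{N}\to\mathcal{B}(X)$ a family of projections compatible with the system $x_{n+1}=A(n)x_n$, with complementary family $Q(n)=I-P(n)$. Then the system is $P$-uniformly exponentially dichotomic if and only if there exists a constant $D>0$ such that \[ \sum_{j=m}^{\infty}\|\mathcal{A}_P(j,n)x\|+\sum_{k=n}^{m}\|\mathcal{A}_Q(k,n)x\|\le D\big(\|\mathcal{A}_P(m,n)x\|+\|\mathcal{A}_Q(m,n)x\|\big) \] for all $(m,n)\in\Delta$ and all $x\in X$.
   Context: $\mathbb{N}$ denotes the set of positive integers; $\mathcal{B}(X)$ is the Banach algebra of bounded linear operators on $X$, and $I$ is the identity operator. $\Delta=\{(m,n)\in\mathbb{N}^2: m\ge n\}$. A family of projections is a map $P:\mathbb{N}\to\mathcal{B}(X)$ with $P(n)^2=P(n)$ for all $n$; its complementary family is $Q(n)=I-P(n)$. $P$ is compatible with the system $x_{n+1}=A(n)x_n$ if $A(n+1)P(n)=P(n+1)A(n+1)$ for all $n\in\mathbb{N}$. For $(m,n)\in\Delta$ define $\mathcal{A}_P(m,n)=A(m)\cdots A(n+1)P(n)$ if $m>n$ and $\mathcal{A}_P(n,n)=P(n)$; similarly $\mathcal{A}_Q(m,n)=A(m)\cdots A(n+1)Q(n)$ if $m>n$ and $\mathcal{A}_Q(n,n)=Q(n)$. The system is $P$-uniformly exponentially dichotomic if there exist constants $N\ge1$ and $\alpha>0$ such that $e^{\alpha(m-n)}\big(\|\mathcal{A}_P(m,n)x\|+\|Q(n)x\|\big)\le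 N\big(\|P(n)x\|+\|\mathcal{A}_Q(m,n)x\|\big)$ for all $(m,n)\in\Delta$, $x\in X$. *)

(* Defs.v *)
From HB Require Import structures.
From mathcomp Require Import all_boot all_order all_algebra.
From mathcomp Require Import all_classical all_reals all_analysis.
Set Implicit Arguments. Unset Strict Implicit. Unset Printing Implicit Defensive.
Import Order.TTheory GRing.Theory Num.Theory.
Import numFieldNormedType.Exports.
Local Open Scope ring_scope.

Section Evolution.
Context {R : realType} {X : normedModType R}.

Fixpoint evol (A : nat -> X -> X) (n k : nat) (x : X) : X :=
  match k with
  | 0 => x
  | k'.+1 => A (n + k'.+1)%N (evol A n k' x)
  end.

Definition compl (P : nat -> X -> X) (n : nat) (x : X) : X := x - P n x.

(* A_P(m,n) x = A(m)...A(n+1) P(n) x  (and P(n) x if m = n) *)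
Definition cocycleP (A P : nat -> X -> X) (m n : nat) (x : X) : X :=
  evol A n (m - n) (P n x).

(* A_Q(m,n) x = A(m)...A(n+1) Q(n) x  (and Q(n) x if m = n) *)
Definition cocycleQ (A P : nat -> X -> X) (m n : nat) (x : X) : X :=
  evol A n (m - n) (compl P n x).

Definition P_UED (A P : nat -> X -> X) : Prop :=
  exists (N alpha : R), 1 <= N /\ 0 < alpha /\
    forall (m n : nat) (x : X), (1 <= n)%N -> (n <= m)%N ->
      expR (alpha * (m - n)%:R) * (`|cocycleP A P m n x| + `|compl P n x|)
      <= N * (`|P n x| + `|cocycleQ A P m n x|).

End Evolution.

(* Main.v *)
Require Import Defs.
From HB Require Import structures.
From mathcomp Require Import all_boot all_order all_algebra.
From mathcomp Require Import all_classical all_reals all_analysis.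
From mathcomp Require Import zify ring lra.
Import Order.TTheory GRing.Theory Num.Theory.
Import numFieldNormedType.Exports.
Local Open Scope ring_scope.
Lemma evol0 (R : realType) (X : normedModType R) (A : nat -> {linear X -> X}) n k :
  evol (fun j => A j : X -> X) n k 0 = 0.
Proof. by elim: k => //= k ->; rewrite linear0. Qed.

Lemma evolB (R : realType) (X : normedModType R) (A : nat -> {linear X -> X}) n k x y :
  evol (fun j => A j : X -> X) n k (x - y) =
  evol (fun j => A j : X -> X) n k x - evol (fun j => A j : X -> X) n k y.
Proof. by elim: k => //= k ->; rewrite linearB. Qed.

Lemma evol_add (R : realType) (X : normedModType R) (A : nat -> X -> X) n k1 k2 y :
  evol A n (k1 + k2) y = evol A (n + k1) k2 (evol A n k1 y).
Proof. elim: k2 => [|k2 IH]; first by rewrite addn0. by rewrite addnS /= IH -addnA !addnS. Qed.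


Lemma evol_P (R : realType) (X : normedModType R) (A P : nat -> {linear X -> X})
  (hcompat : forall n : nat, (1 <= n)%N ->
     forall x : X, A n.+1 (P n x) = P n.+1 (A n.+1 x)) n k y : (1 <= n)%N ->
  P (n + k)%N (evol (fun j => A j : X -> X) n k y) = evol (fun j => A j : X -> X) n k (P n y).
Proof.
move=> n1; elim: k => [|k IH] /=; first by rewrite addn0.
by rewrite addnS -hcompat ?IH //; apply: leq_trans n1 (leq_addr _ _).
Qed.


Section Coc.
Variables (R : realType) (X : normedModType R) (A P : nat -> {linear X -> X}).
Hypothesis (hPproj : forall n : nat, (1 <= n)%N -> forall x : X, P n (P n x) = P n x).
Hypothesis (hcompat : forall n : nat, (1 <= n)%N ->
     forall x : X, A n.+1 (P n x) = P n.+1 (A n.+1 x)).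
Local Notation Af := (fun k => A k : X -> X).
Local Notation Pf := (fun k => P k : X -> X).

Lemma Pevol n k y : (1 <= n)%N -> (n <= k)%N ->
  P k (evol Af n (k - n) y) = evol Af n (k - n) (P n y).
Proof. by move=> n1 nk; rewrite -{1}(subnKC nk) evol_P. Qed.

Lemma cocP_shift n m j x : (1 <= n)%N -> (n <= m)%N -> (m <= j)%N ->
  cocycleP Af Pf j m (cocycleP Af Pf m n x) = cocycleP Af Pf j n x.
Proof.
move=> n1 nm mj; rewrite /cocycleP Pevol // hPproj //.
rewrite -{1}(subnKC nm) -evol_add; congr evol; lia.
Qed.

Lemma compl_cocP n m x : (1 <= n)%N -> (n <= m)%N -> compl Pf m (cocycleP Af Pf m n x) = 0.
Proof. by move=> n1 nm; rewrite /compl /cocycleP Pevol // hPproj // subrr. Qed.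

Lemma cocQ_cocP n m j x : (1 <= n)%N -> (n <= m)%N ->
  cocycleQ Af Pf j m (cocycleP Af Pf m n x) = 0.
Proof. by move=> n1 nm; rewrite /cocycleQ compl_cocP // evol0. Qed.

Lemma P_cocQ n k x : (1 <= n)%N -> (n <= k)%N -> P k (cocycleQ Af Pf k n x) = 0.
Proof.
by move=> n1 nk; rewrite /cocycleQ /compl Pevol // linearB /= hPproj // subrr evol0.
Qed.

Lemma cocP_cocQ n k m x : (1 <= n)%N -> (n <= k)%N ->
  cocycleP Af Pf m k (cocycleQ Af Pf k n x) = 0.
Proof. by move=> n1 nk; rewrite /cocycleP P_cocQ // evol0. Qed.

Lemma compl_id k y : P k y = 0 -> compl Pf k y = y.
Proof. by move=> h; rewrite /compl h subr0. Qed.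

Lemma cocQ_shift n k m x : (1 <= n)%N -> (n <= k)%N -> (k <= m)%N ->
  cocycleQ Af Pf m k (cocycleQ Af Pf k n x) = cocycleQ Af Pf m n x.
Proof.
move=> n1 nk km; rewrite {1}/cocycleQ compl_id ?P_cocQ //.
rewrite /cocycleQ -{1}(subnKC nk) -evol_add; congr evol; lia.
Qed.

Lemma P_cocP n m x : (1 <= n)%N -> (n <= m)%N -> P m (cocycleP Af Pf m n x) = cocycleP Af Pf m n x.
Proof. by move=> n1 nm; rewrite /cocycleP Pevol // hPproj. Qed.

Lemma cocP_P n j x : (1 <= n)%N -> cocycleP Af Pf j n (P n x) = cocycleP Af Pf j n x.
Proof. by move=> n1; rewrite /cocycleP hPproj. Qed.

Lemma cocQ_P n j x : (1 <= n)%N -> cocycleQ Af Pf j n (P n x) = 0.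
Proof. by move=> n1; rewrite /cocycleQ /compl hPproj // subrr evol0. Qed.

Lemma P_compl n x : (1 <= n)%N -> P n (compl Pf n x) = 0.
Proof. by move=> n1; rewrite /compl linearB /= hPproj // subrr. Qed.

Lemma cocP_compl n j x : (1 <= n)%N -> cocycleP Af Pf j n (compl Pf n x) = 0.
Proof. by move=> n1; rewrite /cocycleP P_compl // evol0. Qed.

Lemma cocQ_compl n j x : (1 <= n)%N -> cocycleQ Af Pf j n (compl Pf n x) = cocycleQ Af Pf j n x.
Proof. by move=> n1; rewrite {1}/cocycleQ compl_id ?P_compl. Qed.
End Coc.

Lemma geo_le (R : realType) (r : R) k : 0 <= r -> r < 1 ->
  \sum_(0 <= i < k) r ^+ i <= (1 - r)^-1.
Proof.
move=> r0 r1; have r1p : 0 < 1 - r by rewrite subr_gt0.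
elim: k => [|k IH]; first by rewrite big_geq // invr_ge0 ltW.
rewrite big_nat_recl // expr0.
under eq_bigr do rewrite exprS.
rewrite -mulr_sumr.
have h : r * \sum_(0 <= i < k) r ^+ i <= r * (1 - r)^-1 by rewrite ler_wpM2l.
apply: le_trans (lerD (lexx 1) h) _.
rewrite le_eqVlt; apply/orP; left; apply/eqP; field.
by rewrite gt_eqF.
Qed.

Lemma geo_le2 (R : realType) (r : R) a b : 0 <= r -> r < 1 ->
  \sum_(a <= i < b) r ^+ (i - a) <= (1 - r)^-1.
Proof.
move=> r0 r1; rewrite -{1}(add0n a) big_addn.
under eq_bigr do rewrite addnK.
exact: geo_le.
Qed.

Lemma geo_le3 (R : realType) (r : R) a b : 0 <= r -> r < 1 ->
  \sum_(a <= i < b.+1) r ^+ (b - i) <= (1 - r)^-1.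
Proof.
move=> r0 r1; rewrite big_nat_rev.
rewrite (eq_big_nat _ _ (F2 := fun i => r ^+ (i - a))); first exact: geo_le2.
by move=> i /andP[h1 h2]; congr (_ ^+ _); lia.
Qed.

Lemma decayP (R : realType) (f : nat -> R) (D : R) n :
  (forall j, 0 <= f j) -> 0 < D ->
  (forall m K, (n <= m)%N -> \sum_(m <= j < K) f j <= D * f m) ->
  forall d, f (n + d)%N * (1 + D^-1) ^+ d <= D * f n.
Proof.
move=> f0 D0 hyp d.
set b := 1 + D^-1.
have b0 : 0 <= b by rewrite addr_ge0 // invr_ge0 ltW.
pose K := (n + d).+1.
have claim : forall e, (\sum_((n + e)%N <= j < K) f j) * b ^+ e <= \sum_(n <= j < K) f j.
  elim=> [|e IH]; first by rewrite addn0 expr0 mulr1.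
  apply: le_trans IH; rewrite exprS mulrA; apply: ler_wpM2r; first exact: exprn_ge0.
  have Sge0 : forall m, 0 <= \sum_(m <= j < K) f j by move=> m; apply: sumr_ge0.
  case: (ltnP (n + e) K) => hK.
    rewrite (big_ltn hK) addnS.
    set S := \sum_(_ <= _ < _) _.
    have hS : S <= D * f (n + e)%N.
      apply: le_trans (hyp (n + e)%N K (leq_addr _ _)).
      by rewrite (big_ltn hK) lerDr.
    rewrite /b mulrDr mulr1 addrC lerD2r.
    by rewrite ler_pdivrMr // mulrC.
  by rewrite addnS big_geq ?mul0r ?Sge0 //; apply: leq_trans hK _.
have h1 : f (n + d)%N <= \sum_((n + d)%N <= j < K) f j by rewrite big_nat1.
apply: le_trans (le_trans _ (claim d)) (hyp n K (leqnn _)).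
by apply: ler_wpM2r => //; exact: exprn_ge0.
Qed.

Lemma decayQ (R : realType) (g : nat -> R) (D : R) n :
  (forall j, 0 <= g j) -> 0 < D ->
  (forall m, (n <= m)%N -> \sum_(n <= k < m.+1) g k <= D * g m) ->
  forall d, g n * (1 + D^-1) ^+ d <= D * g (n + d)%N.
Proof.
move=> g0 D0 hyp d.
set b := 1 + D^-1.
have claim : forall e, g n * b ^+ e <= \sum_(n <= k < (n + e).+1) g k.
  elim=> [|e IH]; first by rewrite addn0 expr0 mulr1 big_nat1.
  rewrite addnS big_nat_recr /=; last by rewrite -addnS leq_addr.
  set T := \sum_(_ <= _ < _) _.
  have hT : T <= D * g (n + e).+1.
    apply: le_trans (hyp (n + e).+1 _); last by rewrite -addnS leq_addr.
    by rewrite big_nat_recr /= ?lerDl // -addnS leq_addr.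
  rewrite exprS mulrCA mulrC.
  apply: le_trans (ler_wpM2r _ IH) _; first by rewrite addr_ge0 // invr_ge0 ltW.
  rewrite /b mulrDr mulr1 lerD2l mulrC.
  by rewrite ler_pdivrMl.
apply: le_trans (claim d) _.
exact: hyp (leq_addr _ _).
Qed.

Theorem mainTheorem3 (R : realType) (X : completeNormedModType R)
  (A : nat -> {linear X -> X}) (P : nat -> {linear X -> X})
  (hAcont : forall n : nat, (1 <= n)%N -> continuous (A n))
  (hPcont : forall n : nat, (1 <= n)%N -> continuous (P n))
  (hPproj : forall n : nat, (1 <= n)%N -> forall x : X, P n (P n x) = P n x)
  (hcompat : forall n : nat, (1 <= n)%N ->
     forall x : X, A n.+1 (P n x) = P n.+1 (A n.+1 x)) :
  P_UED (fun n => A n : X -> X) (fun n => P n : X -> X) <->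
  exists D : R, 0 < D /\
    forall (m n : nat) (x : X), (1 <= n)%N -> (n <= m)%N ->
      ((\sum_(m <= j <oo) (`|cocycleP (fun k => A k : X -> X) (fun k => P k : X -> X) j n x|)%:E)
       + (\sum_(n <= k < m.+1) `|cocycleQ (fun k => A k : X -> X) (fun k => P k : X -> X) k n x|)%:E
       <= (D * (`|cocycleP (fun k => A k : X -> X) (fun k => P k : X -> X) m n x|
               + `|cocycleQ (fun k => A k : X -> X) (fun k => P k : X -> X) m n x|))%:E)%E.
Proof.
split.
- case=> N [al [N1 [al0 hU]]].
  set r := expR (- al).
  have r0 : 0 < r by apply: expR_gt0.
  have r1 : r < 1 by rewrite /r expR_lt1 oppr_lt0.
  have N0 : 0 < N by apply: lt_le_trans N1.
  have bound (k : nat) (u v : R) : expR (al * k%:R) * u <= N * v -> u <= N * r ^+ k * v.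
    move=> h; have E0 := expR_gt0 (al * k%:R).
    rewrite /r expRN exprVn -expRM_natr mulrAC ler_pdivlMr // mulrC //.
  exists (N / (1 - r)); split; first by rewrite divr_gt0 // subr_gt0.
  move=> m n x n1 nm.
  have hP j : (m <= j)%N -> `|cocycleP (fun k => A k : X -> X) (fun k => P k : X -> X) j n x|
      <= N * r ^+ (j - m) * `|cocycleP (fun k => A k : X -> X) (fun k => P k : X -> X) m n x|.
    move=> mj; apply: bound.
    have := hU j m (cocycleP (fun k => A k : X -> X) (fun k => P k : X -> X) m n x)
      (leq_trans n1 nm) mj.
    by rewrite cocP_shift // compl_cocP // cocQ_cocP // P_cocP // normr0 !addr0.
  have hQ k : (n <= k)%N -> (k <= m)%N -> `|cocycleQ (fun k => A k : X -> X) (fun k => P k : X -> X) k n x|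
      <= N * r ^+ (m - k) * `|cocycleQ (fun k => A k : X -> X) (fun k => P k : X -> X) m n x|.
    move=> nk km; apply: bound.
    have := hU m k (cocycleQ (fun k => A k : X -> X) (fun k => P k : X -> X) k n x)
      (leq_trans n1 nk) km.
    have hz : P k (cocycleQ (fun k => A k : X -> X) (fun k => P k : X -> X) k n x) = 0 by apply: P_cocQ.
    by rewrite cocP_cocQ // compl_id // hz cocQ_shift // normr0 !add0r.
  rewrite mulrDr [X in (_ <= X)%E]EFinD; apply: leeD.
    apply: (lime_le (is_cvg_ereal_nneg_natsum _)); first by move=> j _; rewrite lee_fin.
    apply: nearW => K; rewrite sumEFin lee_fin.
    apply: le_trans (ler_sum_nat (G := fun j => (N * `|cocycleP (fun k => A k : X -> X) (fun k => P k : X -> X) m n x|) * r ^+ (j - m)) _) _.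
      by move=> j /andP[mj _]; rewrite mulrAC; exact: hP.
    rewrite -mulr_sumr [X in _ <= X]mulrAC; apply: ler_wpM2l; last exact: geo_le2 (ltW r0) r1.
    by rewrite mulr_ge0 // ltW.
  rewrite lee_fin.
  apply: le_trans (ler_sum_nat (G := fun j => (N * `|cocycleQ (fun k => A k : X -> X) (fun k => P k : X -> X) m n x|) * r ^+ (m - j)) _) _.
    by move=> j /andP[nj jm]; rewrite mulrAC; exact: hQ.
  rewrite -mulr_sumr [X in _ <= X]mulrAC; apply: ler_wpM2l; last exact: geo_le3 (ltW r0) r1.
  by rewrite mulr_ge0 // ltW.
- case=> D [D0 hD].
  set b := 1 + D^-1.
  have b1 : 1 < b by rewrite /b ltrDl invr_gt0.
  have b0 : 0 < b by apply: lt_trans b1.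
  exists (D + 1), (ln b); split; first by rewrite lerDr ltW.
  split; first exact: ln_gt0.
  move=> m n x n1 nm.
  rewrite mulrC expRM_natr lnK ?posrE //.
  set f := fun j => `|cocycleP (fun k => A k : X -> X) (fun k => P k : X -> X) j n (P n x)|.
  set g := fun j => `|cocycleQ (fun k => A k : X -> X) (fun k => P k : X -> X) j n
                        (compl (fun k => P k : X -> X) n x)|.
  have hf : forall m' K, (n <= m')%N -> \sum_(m' <= j < K) f j <= D * f m'.
    move=> m' K nm'; have := hD m' n (P n x) n1 nm'.
    rewrite (@cocQ_P R X A P hPproj n m' x n1) normr0 addr0 => h.
    rewrite -lee_fin -sumEFin; apply: le_trans h.
    apply: le_trans (lee_paddr _ (lexx _)); last by rewrite lee_fin sumr_ge0.
    exact: (@nneseries_lim_ge R (fun j => (f j)%:E) xpredT m' K (fun j _ _ => normr_ge0 _)).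
  have hg : forall m', (n <= m')%N -> \sum_(n <= k < m'.+1) g k <= D * g m'.
    move=> m' nm'; have := hD m' n (compl (fun k => P k : X -> X) n x) n1 nm'.
    rewrite (@cocP_compl R X A P hPproj n m' x n1) normr0 add0r => h.
    rewrite -lee_fin; apply: le_trans h.
    apply: lee_paddl; last exact: lexx.
    exact: nneseries_ge0.
  have := @decayP R f D n (fun j => normr_ge0 _) D0 hf (m - n).
  have := @decayQ R g D n (fun j => normr_ge0 _) D0 hg (m - n).
  rewrite /f /g subnKC // !cocQ_compl // !cocP_P //.
  rewrite {1 3}/cocycleP {1}/cocycleQ subnn /= -/b.
  set u := `|compl _ _ _|; set v := `|P n x|; set p := `|cocycleP _ _ _ _ _|.
  set q := `|cocycleQ _ _ _ _ _|; set e := b ^+ _.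
  have u0 : 0 <= u := normr_ge0 _. have v0 : 0 <= v := normr_ge0 _.
  have q0 : 0 <= q := normr_ge0 _. have p0 : 0 <= p := normr_ge0 _.
  have ep : p = v by rewrite /p /cocycleP subnn.
  rewrite ep; set w := `|evol _ _ _ _|.
  move=> h1 h2; nra.
Qed.
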